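(* Let $F,G,H$ be graphs. (a) If $F\to G$ and $c=\mathsf{HDE}(F,G)$, then $\hom(F,T)\ge \hom(G,T)^c$ for all graphs $T$. (b) The relation $\succcurlyeq$ (where $F\succcurlyeq G$ means $F\to G$ and $\mathsf{HDE}(F,G)\ge1$) is a partial order on graphs. (c) If $F\to G$ and $G\to H$, then $\mathsf{HDE}(F,H)\ge \mathsf{HDE}(F,G)\cdot\mathsf{HDE}(G,H)$. (d) If $F\to G$, then $\mathsf{HDE}(m\cdot F,n\cdot G)=\frac mn\,\mathsf{HDE}(F,G)$ for all positive integers $m,n$. (e) If there is a homomorphism from $F$ onto $G$ that is surjective on vertices, then $F\succcurlyeq G$. (f) If $F\to G$, then $\mathsf{HDE}(F,G)>0$ if and only if $\bigcup_{\varphi\in\mathsf{Hom}(F,G)}\varphi(V_F)=V_G$.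
   Context: Graphs are finite directed graphs $G=(V_G,E_G)$ with $V_G$ nonempty finite and $E_G\subseteq V_G\times V_G$ (loops allowed). A homomorphism $\varphi:F\to G$ is a map $V_F\to V_G$ with $(\varphi(a),\varphi(b))\in E_G$ for all $(a,b)\in E_F$; $\mathsf{Hom}(F,G)$ is their set, $\hom(F,G)$ its size, and $F\to G$ means $\hom(F,G)\ge1$. For $F\to G$, $\mathsf{HDE}(F,G)=\sup\{c\in\mathbb R:\hom(F,T)\ge\hom(G,T)^c\text{ for all graphs }T\}$. $k\cdot G$ denotes the disjoint union of $k$ copies of $G$. *)

(* Defs.v *)
From Stdlib Require Import Reals ClassicalEpsilon.
From mathcomp Require Import all_boot.
Set Implicit Arguments. Unset Strict Implicit. Unset Printing Implicit Defensive.

Record graph : Type := Graph {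
  gV : finType;
  gE : rel gV;
  gV_nonempty : 0 < #|gV| }.

Definition is_hom (F G : graph) (f : gV F -> gV G) : bool :=
  [forall a, forall b, gE a b ==> gE (f a) (f b)].

Definition hom (F G : graph) : nat :=
  #|[pred f : {ffun gV F -> gV G} | is_hom f]|.

Definition arrow (F G : graph) : Prop := 0 < hom F G.

(* n ^ c for a natural number n and real c, with the convention 0 ^ c = 0. *)
Definition hpow (n : nat) (c : R) : R :=
  if n == 0 then R0 else Rpower (INR n) c.

Definition HDE_set (F G : graph) : R -> Prop :=
  fun c => forall T : graph, Rle (hpow (hom G T) c) (INR (hom F T)).

Definition HDE (F G : graph) : R :=
  epsilon (inhabits R0) (is_lub (HDE_set F G)).

Definition succeq (F G : graph) : Prop := arrow F G /\ Rle R1 (HDE F G).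

Definition iso (F G : graph) : Prop :=
  exists f : gV F -> gV G, bijective f /\ forall a b, gE (f a) (f b) = gE a b.

Lemma copies_nonempty (k : nat) (hk : 0 < k) (G : graph) :
  0 < #|{: 'I_k * gV G}|.
Proof. by rewrite card_prod card_ord muln_gt0 hk gV_nonempty. Qed.

(* k · G : disjoint union of k copies of G (k >= 1) *)
Definition copies (k : nat) (hk : 0 < k) (G : graph) : graph :=
  @Graph (prod 'I_k (gV G))
    (fun x y => (x.1 == y.1) && gE x.2 y.2)
    (copies_nonempty hk G).

(* Main.v *)
Require Import Defs.
From Stdlib Require Import Reals ClassicalEpsilon.
From mathcomp Require Import all_boot.
From Stdlib Require Import Lra Classical.
Set Implicit Arguments. Unset Strict Implicit. Unset Printing Implicit Defensive.

Lemma is_homP (F G : graph) (f : gV F -> gV G) :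
  reflect (forall a b, gE a b -> gE (f a) (f b)) (is_hom f).
Proof.
apply: (iffP forallP) => [H a b eab | H a].
  by have /forallP/(_ b)/implyP := H a; apply.
by apply/forallP => b; apply/implyP; apply: H.
Qed.

Lemma is_hom_ffun (F G : graph) (f : gV F -> gV G) : is_hom (finfun f) = is_hom f.
Proof.
by apply/is_homP/is_homP => H a b /H; rewrite !ffunE.
Qed.

Lemma hom_comp (F G H : graph) (f : gV F -> gV G) (g : gV G -> gV H) :
  is_hom f -> is_hom g -> is_hom (g \o f).
Proof. by move=> /is_homP hf /is_homP hg; apply/is_homP => a b /hf /hg. Qed.

Lemma hom_gt0P (F G : graph) :
  reflect (exists f : gV F -> gV G, is_hom f) (0 < hom F G).
Proof.
apply: (iffP card_gt0P) => [[f]|[f hf]].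
  by rewrite inE => hf; exists f.
by exists (finfun f); rewrite inE is_hom_ffun.
Qed.

Lemma arrow_trans (F G H : graph) : 0 < hom F G -> 0 < hom G H -> 0 < hom F H.
Proof.
move=> /hom_gt0P [f hf] /hom_gt0P [g hg]; apply/hom_gt0P.
by exists (g \o f); apply: hom_comp.
Qed.

Lemma card_le_inj (T1 T2 : finType) (A : {pred T1}) (B : {pred T2}) (h : T1 -> T2) :
  {in A &, injective h} -> (forall x, x \in A -> h x \in B) -> #|A| <= #|B|.
Proof.
move=> inj hAB; rewrite -(card_in_imset inj); apply/subset_leq_card/subsetP.
by move=> y /imsetP [x xA ->]; exact: hAB.
Qed.

Lemma card_eq_bij (T1 T2 : finType) (A : {pred T1}) (B : {pred T2}) (h : T1 -> T2) :
  {in A &, injective h} -> (forall x, x \in A -> h x \in B) ->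
  (forall y, y \in B -> exists2 x, x \in A & y = h x) -> #|A| = #|B|.
Proof.
move=> inj hAB hBA; rewrite -(card_in_imset inj); apply: eq_card => y.
apply/imsetP/idP => [[x xA ->]|/hBA //]; exact: hAB.
Qed.

Lemma hom_surj_le (F G T : graph) (f : gV F -> gV G) :
  is_hom f -> (forall v, exists a, f a = v) -> hom G T <= hom F T.
Proof.
move=> hf fs; apply: (@card_le_inj _ _ _ _ (fun psi : {ffun gV G -> gV T} => finfun (psi \o f))).
  move=> p q _ _ e; apply/ffunP => v; have [a <-] := fs v.
  by have := congr1 (fun z : {ffun gV F -> gV T} => z a) e; rewrite /= !ffunE.
by move=> p; rewrite !inE is_hom_ffun => hp; apply: hom_comp.
Qed.

Lemma hom_copies (k : nat) (hk : 0 < k) (F T : graph) :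
  hom (copies hk F) T = hom F T ^ k.
Proof.
rewrite /hom -[in RHS](card_ord k) -card_ffun_on.
apply: (@card_eq_bij _ _ _ _ (fun f : {ffun 'I_k * gV F -> gV T} =>
    [ffun i => [ffun a => f (i, a)]])).
- move=> p q _ _ e; apply/ffunP => [[i a]].
  by have := congr1 (fun z : {ffun 'I_k -> {ffun gV F -> gV T}} => z i a) e; rewrite /= !ffunE.
- move=> f; rewrite inE => /is_homP hf; apply/ffun_onP => i.
  rewrite ffunE inE; apply/is_homP => a b eab; rewrite !ffunE.
  by apply: (hf (i, a) (i, b)); rewrite /= eqxx.
- move=> g /ffun_onP hg; exists [ffun p => g p.1 p.2].
    rewrite inE; apply/is_homP => [[i a] [j b]] /= /andP [/eqP <- eab].
    rewrite !ffunE /=; have := hg i; rewrite inE => /is_homP; exact.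
  by apply/ffunP => i; apply/ffunP => a; rewrite !ffunE.
Qed.

Lemma hom_cover_le (F G T : graph) :
  (forall v : gV G, exists f : gV F -> gV G, is_hom f /\ exists a, f a = v) ->
  hom G T <= hom F T ^ #|gV G|.
Proof.
move=> H.
have [phi Hphi] := fin_all_exists H.
have [pt Hpt] : exists pt : gV G -> gV F, forall v, phi v (pt v) = v.
  apply: (@fin_all_exists _ (fun _ => gV F) (fun v a => phi v a = v)) => v.
  by have [_ [a ha]] := Hphi v; exists a.
rewrite /hom -card_ffun_on.
apply: (@card_le_inj _ _ _ _ (fun psi : {ffun gV G -> gV T} =>
   [ffun v => [ffun a => psi (phi v a)]])).
  move=> p q _ _ e; apply/ffunP => v.
  by have := congr1 (fun z : {ffun gV G -> {ffun gV F -> gV T}} => z v (pt v)) e; rewrite /= !ffunE Hpt.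
move=> p; rewrite inE => hp; apply/ffun_onP => v; rewrite ffunE inE.
have -> : is_hom [ffun a => p (phi v a)] = is_hom (p \o phi v) by rewrite is_hom_ffun.
by apply: hom_comp => //; case: (Hphi v).
Qed.

Lemma bool_ne : 0 < #|{: bool}|. Proof. by rewrite card_bool. Qed.
Definition Kb : graph := @Graph bool (fun _ _ => true) bool_ne.

Lemma hom_Kb (F : graph) : hom F Kb = 2 ^ #|gV F|.
Proof.
rewrite /hom -(card_bool) -card_ffun; apply: eq_card => f.
rewrite !inE; apply/is_homP => //.
Qed.

Section Blow.
Variables (G : graph) (v : gV G) (N : nat).
Lemma blow_ne : 0 < #|{: gV G + 'I_N}|.
Proof. by rewrite card_sum ltn_addr // gV_nonempty. Qed.
Definition pr (x : gV G + 'I_N) : gV G := if x is inl u then u else v.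
Definition Blow : graph := @Graph (gV G + 'I_N)%type (fun x y => gE (pr x) (pr y)) blow_ne.

Lemma blow_hom_le (F : graph) :
  (forall f : gV F -> gV G, is_hom f -> forall a, f a <> v) ->
  hom F Blow <= hom F G.
Proof.
move=> Hv.
apply: (@card_le_inj _ _ _ _ (fun f : {ffun gV F -> gV Blow} => finfun (pr \o f))).
  have key : forall f : {ffun gV F -> gV Blow}, is_hom f ->
     forall a, f a = inl (pr (f a)).
    move=> f hf a.
    have hp : is_hom (pr \o f) by apply/is_homP => x y /= /(elimT (is_homP _) hf).
    by case E: (f a) => [u|i] //; have := Hv _ hp a; rewrite /= E.
  move=> p q; rewrite !inE => hp hq e; apply/ffunP => a; rewrite (key _ hp) (key _ hq).
  by have := congr1 (fun z : {ffun gV F -> gV G} => z a) e; rewrite !ffunE /= => ->.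
move=> f; rewrite !inE is_hom_ffun => hf.
by apply/is_homP => x y /= /(elimT (is_homP _) hf).
Qed.

Lemma blow_hom_ge : N <= hom G Blow.
Proof.
rewrite -{1}(card_ord N).
apply: (@card_le_inj _ _ [pred i : 'I_N | true] _
  (fun i => [ffun u : gV G => if u == v then (inr i : gV Blow) else inl u])).
  move=> i j _ _ e.
  have := congr1 (fun z : {ffun gV G -> gV Blow} => z v) e; rewrite !ffunE eqxx.
  by case.
move=> i _; rewrite inE; apply/is_homP => a b eab; rewrite !ffunE /=.
have P u : pr (if u == v then (inr i : gV Blow) else inl u) = u.
  by case: eqP => [->|].
by rewrite !P.
Qed.
End Blow.

Definition im (F T : graph) (f : {ffun gV F -> gV T}) : {set gV T} := f @: [set: gV F].

Definition homin (F T : graph) (S : {set gV T}) :=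
  #|[pred f : {ffun gV F -> gV T} | is_hom f && (im f \subset S)]|.
Definition surjon (F T : graph) (S : {set gV T}) :=
  #|[pred f : {ffun gV F -> gV T} | is_hom f && (im f == S)]|.
Arguments homin : clear implicits.
Arguments surjon : clear implicits.

Lemma homin_sum (F T : graph) (S : {set gV T}) :
  homin F T S = \sum_(S' : {set gV T} | S' \subset S) surjon F T S'.
Proof.
rewrite /homin -sum1_card.
rewrite (partition_big (fun f : {ffun gV F -> gV T} => im f) (fun S' => S' \subset S)).
  apply: eq_bigr => S' sS'; rewrite sum1dep_card; apply: eq_card => f.
  by rewrite !inE; case: (im f =P S') => [->|]; rewrite ?sS' ?andbF; case: (is_hom f).
by move=> f; rewrite inE => /andP [].
Qed.

Section Induced.
Variables (T : graph) (S : {set gV T}) (hS : 0 < #|S|).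
Lemma ind_ne : 0 < #|{: {x : gV T | x \in S}}|.
Proof. by rewrite card_sig (_ : #|_| = #|S|) //; apply: eq_card => x; rewrite !inE. Qed.
Definition induced : graph :=
  @Graph {x : gV T | x \in S} (fun x y => gE (val x) (val y)) ind_ne.

Lemma homin_induced (F : graph) : homin F T S = hom F induced.
Proof.
have [x0 x0S] : exists x0, x0 \in S by apply/card_gt0P.
pose u0 : gV induced := exist _ x0 x0S.
symmetry; apply: (@card_eq_bij _ _ _ _ (fun g : {ffun gV F -> gV induced} => finfun (val \o g))).
- move=> p q _ _ e; apply/ffunP => a; apply: val_inj.
  by have := congr1 (fun z : {ffun gV F -> gV T} => z a) e; rewrite !ffunE.
- move=> g; rewrite !inE is_hom_ffun => hg; apply/andP; split.
    by apply/is_homP => a b /(elimT (is_homP _) hg).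
  by apply/subsetP => y /imsetP [a _ ->]; rewrite ffunE /=; case: (g a).
- move=> f; rewrite inE => /andP [hf sf].
  have fS a : f a \in S by apply: (subsetP sf); apply/imsetP; exists a; rewrite ?inE.
  exists [ffun a => insubd u0 (f a) : gV induced].
    rewrite inE; apply/is_homP => a b eab; rewrite !ffunE /= !val_insubd !fS.
    exact: (elimT (is_homP _) hf).
  apply/ffunP => a; rewrite !ffunE /=; have := val_insubd u0 (f a); rewrite fS /= => <-; congr sval; by rewrite ffunE.
Qed.
End Induced.

Lemma homin0 (F T : graph) (S : {set gV T}) : #|S| = 0 -> homin F T S = 0.
Proof.
move=> /cards0_eq ->; rewrite /homin; apply: eq_card0 => f; rewrite !inE; apply/negP => /andP [_ /subsetP s].
have [a _] := card_gt0P (gV_nonempty F).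
have : f a \in im f by apply/imsetP; exists a; rewrite ?inE.
by move=> /s; rewrite inE.
Qed.

Lemma surj_eq (F G : graph) : (forall T, hom F T = hom G T) ->
  forall T (S : {set gV T}), surjon F T S = surjon G T S.
Proof.
move=> Hh T S; have [n] := ubnP #|S|; elim: n S => // n IH S /ltnSE le.
have hin : homin F T S = homin G T S.
  case: (posnP #|S|) => [e|p]; first by rewrite !homin0.
  by rewrite !(homin_induced p).
move: hin; rewrite !homin_sum (bigD1 S (subxx S)) [in X in _ = X -> _](bigD1 S (subxx S)).
rewrite (eq_bigr (fun S' => surjon G T S')); first by move/addIn.
move=> S' /andP [sS' nS']; apply: IH.
have : S' \proper S by rewrite properEneq nS'.
by move/proper_card => lt; apply: leq_trans lt le.
Qed.

Lemma surj_exists (F G : graph) : (forall T, hom F T = hom G T) ->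
  exists g : {ffun gV G -> gV F}, is_hom g && (im g == setT).
Proof.
move=> Hh; have := surj_eq Hh [set: gV F].
have : 0 < surjon F F [set: gV F].
  apply/card_gt0P; exists [ffun a => a]; rewrite inE; apply/andP; split.
    by apply/is_homP => a b; rewrite !ffunE.
  apply/eqP/setP => a; rewrite !inE; apply/imsetP; exists a; rewrite ?inE ?ffunE //.
move=> p e; rewrite e in p; have [g] := card_gt0P p; rewrite inE => hg.
by exists g.
Qed.

Lemma surj_inj (F G : graph) (f : {ffun gV F -> gV G}) :
  im f = setT -> #|gV F| <= #|gV G| -> injective f /\ #|gV G| <= #|gV F|.
Proof.
move=> e le.
have c : #|gV G| <= #|gV F| by rewrite -cardsT -e -[X in _ <= X]cardsT leq_imset_card.
split=> //.
have /imset_injP inj : #|f @: [set: gV F]| == #|[set: gV F]|.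
  by rewrite -/(im f) e !cardsT eqn_leq c le.
by move=> x y; apply: inj; rewrite inE.
Qed.

Definition EP (X : graph) := [pred p : gV X * gV X | gE p.1 p.2].

Lemma lovasz (F G : graph) : (forall T, hom F T = hom G T) -> iso F G.
Proof.
move=> Hh.
have [g /andP [hg /eqP ig]] := surj_exists Hh.
have [f /andP [hf /eqP iF]] := surj_exists (fun T => esym (Hh T)).
have c1 : #|gV F| <= #|gV G| by rewrite -cardsT -ig -[X in _ <= X]cardsT leq_imset_card.
have [finj _] := surj_inj iF c1.
have c2 : #|gV G| <= #|gV F| by rewrite -cardsT -iF -[X in _ <= X]cardsT leq_imset_card.
have [ginj _] := surj_inj ig c2.
have e1 : #|EP F| <= #|EP G|.
  apply: (@card_le_inj _ _ _ _ (fun p : gV F * gV F => (f p.1, f p.2))).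
    by move=> [a b] [a' b'] _ _ [/finj -> /finj ->].
  by move=> [a b]; rewrite !inE /=; apply: (elimT (is_homP _) hf).
have e2 : #|EP G| <= #|EP F|.
  apply: (@card_le_inj _ _ _ _ (fun p : gV G * gV G => (g p.1, g p.2))).
    by move=> [a b] [a' b'] _ _ [/ginj -> /ginj ->].
  by move=> [a b]; rewrite !inE /=; apply: (elimT (is_homP _) hg).
exists f; split; first by apply: inj_card_bij.
move=> a b; apply/idP/idP; last by apply: (elimT (is_homP _) hf).
pose h := fun p : gV F * gV F => (f p.1, f p.2).
have hinj : {in EP F &, injective h} by move=> [x y] [x' y'] _ _ [/finj -> /finj ->].
have sub : [set h p | p in EP F] \subset EP G.
  by apply/subsetP => q /imsetP [[x y] xy ->]; rewrite !inE /=; apply: (elimT (is_homP _) hf).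
have ceq : #|[set h p | p in EP F]| = #|EP G|.
  by rewrite (card_in_imset hinj); apply/eqP; rewrite eqn_leq e1 e2.
move=> eab.
have : (f a, f b) \in [set h p | p in EP F].
  by rewrite ((subset_cardP ceq) sub); rewrite inE.
by case/imsetP => [[x y]]; rewrite inE /= => exy [/finj -> /finj ->].
Qed.

Local Open Scope R_scope.

Lemma lt_INR' m n : (m < n)%N -> INR m < INR n.
Proof. by move/ltP; apply: lt_INR. Qed.
Lemma le_INR' m n : (m <= n)%N -> INR m <= INR n.
Proof. by move/leP; apply: le_INR. Qed.

Lemma INR_expn m n : INR (m ^ n)%N = INR m ^ n.
Proof. elim: n => [|n IH] //=; by rewrite expnS -multE mult_INR IH. Qed.

Lemma ln_le_mono x y : 0 < x -> x <= y -> ln x <= ln y.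
Proof. move=> hx [/(ln_increasing _ _ hx)|->]; lra. Qed.

Lemma ln_le_inv x y : 0 < x -> 0 < y -> ln x <= ln y -> x <= y.
Proof.
move=> hx hy hl; destruct (Rle_or_lt x y) as [h|h] => //.
have := ln_increasing _ _ hy h; lra.
Qed.

Lemma ln_nat_ge0 (n : nat) : (0 < n)%N -> 0 <= ln (INR n).
Proof.
move=> hn; rewrite -ln_1; apply: ln_le_mono; first lra.
exact: (le_INR' hn).
Qed.

Lemma INRpos (n : nat) : (0 < n)%N -> 0 < INR n.
Proof. exact: (lt_INR' (m:=0)). Qed.

Definition Hs (F G : graph) (c : R) :=
  forall T : graph, (0 < hom G T)%N -> c * ln (INR (hom G T)) <= ln (INR (hom F T)).

Definition Pc (F G : graph) := forall T : graph, (0 < hom G T)%N -> (0 < hom F T)%N.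

Lemma Pc_arrow F G : arrow F G -> Pc F G.
Proof. by move=> a T; apply: arrow_trans. Qed.

Lemma set_char F G c : Pc F G -> (HDE_set F G c <-> Hs F G c).
Proof.
move=> P; split=> H T.
  move=> hG; have := H T; rewrite /hpow; case: eqP => [e|_]; first by rewrite e in hG.
  rewrite /Rpower => le; have hF := INRpos (P T hG).
  rewrite -(ln_exp (c * _)); apply: ln_le_mono => //; apply: exp_pos.
rewrite /hpow; case: eqP => [_|ne]; first by apply: pos_INR.
have hG : (0 < hom G T)%N by rewrite lt0n; apply/eqP.
have hF := INRpos (P T hG).
rewrite /Rpower -(exp_ln _ hF); destruct (H T hG) as [h|h].
  by left; apply: exp_increasing.
by rewrite h; right.
Qed.

Lemma lub_unique (E : R -> Prop) x y : is_lub E x -> is_lub E y -> x = y.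
Proof.
move=> [ux lx] [uy ly]; apply: Rle_antisym; [apply: lx uy | apply: ly ux].
Qed.

Lemma HDE_eq F G x : is_lub (HDE_set F G) x -> HDE F G = x.
Proof.
move=> H; apply: (lub_unique _ H).
exact: (epsilon_spec (inhabits R0) (is_lub (HDE_set F G)) (ex_intro _ x H)).
Qed.

Lemma Hs_bound F G c : Pc F G -> Hs F G c -> c <= INR #|gV F| / INR #|gV G|.
Proof.
move=> P H.
have hK : (0 < hom G Kb)%N by rewrite hom_Kb expn_gt0.
have := H Kb hK; rewrite !hom_Kb !INR_expn !ln_pow /=; try lra.
have l2 : 0 < ln (INR 2) by rewrite -ln_1; apply: ln_increasing => /=; lra.
have g0 : 0 < INR #|gV G| by apply: INRpos; apply: gV_nonempty.
move=> h; apply (Rmult_le_reg_r (INR #|gV G|)) => //.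
rewrite /Rdiv Rmult_assoc Rinv_l ?Rmult_1_r; last by apply: Rgt_not_eq.
change (INR 2) with (1+1) in l2.
apply (Rmult_le_reg_r (ln (1+1))) => //; by rewrite Rmult_assoc.
Qed.

Lemma HDE_spec F G : Pc F G ->
  Hs F G (HDE F G) /\ (forall c, Hs F G c -> c <= HDE F G).
Proof.
move=> P.
have bd : bound (HDE_set F G).
  exists (INR #|gV F| / INR #|gV G|) => c /(set_char _ P) h; exact: Hs_bound P h.
have ne : exists x, HDE_set F G x.
  exists 0; apply/(set_char _ P) => T hG; rewrite Rmult_0_l; exact: ln_nat_ge0 (P T hG).
have [M HM] := completeness _ bd ne.
rewrite (HDE_eq HM); case: HM => [ub lb]; split; last first.
  by move=> c /(set_char _ P) /ub.
move=> T hG.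
have hF := ln_nat_ge0 (P T hG).
case: (ltngtP (hom G T) 1) => [lt|gt|e].
- by move: hG; rewrite lt0n; move: lt; rewrite ltnS leqn0 => ->.
- have lg : 0 < ln (INR (hom G T)).
    by rewrite -ln_1; apply: ln_increasing; [lra | exact: (lt_INR' gt)].
  have : M <= ln (INR (hom F T)) / ln (INR (hom G T)).
    apply: lb => c /(set_char _ P) h; have := h T hG => hc.
    apply (Rmult_le_reg_r (ln (INR (hom G T)))) => //.
    rewrite /Rdiv Rmult_assoc Rinv_l; [lra | by apply: Rgt_not_eq].
  move=> hM; apply (Rmult_le_reg_r (/ ln (INR (hom G T)))).
    by apply: Rinv_0_lt_compat.
  rewrite Rmult_assoc Rinv_r; [lra | by apply: Rgt_not_eq].
- by rewrite e /= ln_1 Rmult_0_r.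
Qed.

Lemma HDE_ge0 F G : Pc F G -> 0 <= HDE F G.
Proof.
move=> P; apply: (proj2 (HDE_spec P)) => T hG; rewrite Rmult_0_l.
exact: ln_nat_ge0 (P T hG).
Qed.

Lemma HDE_is F G x : Pc F G -> Hs F G x -> (forall c, Hs F G c -> c <= x) -> HDE F G = x.
Proof.
move=> P hx ub; have [h1 h2] := HDE_spec P; apply: Rle_antisym; auto.
Qed.

Lemma Hs_mono F G c d : Hs F G d -> c <= d -> Hs F G c.
Proof.
move=> H cd T hG; have := H T hG; have := ln_nat_ge0 hG => l.
have := Rmult_le_compat_r _ _ _ l cd; lra.
Qed.

Local Open Scope R_scope.

Lemma part_c F G H : arrow F G -> arrow G H -> HDE F G * HDE G H <= HDE F H.
Proof.
move=> aFG aGH; have PFG := Pc_arrow aFG; have PGH := Pc_arrow aGH.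
have PFH := Pc_arrow (arrow_trans aFG aGH).
apply: (proj2 (HDE_spec PFH)) => T hH.
have hG := PGH T hH.
have [s1 _] := HDE_spec PFG; have [s2 _] := HDE_spec PGH.
have a0 := HDE_ge0 PFG.
rewrite Rmult_assoc; apply: Rle_trans (s1 T hG).
by apply: Rmult_le_compat_l => //; apply: s2.
Qed.

Lemma one_le F G : Pc F G -> Hs F G 1 -> forall T, (hom G T <= hom F T)%N.
Proof.
move=> P H T; case: (posnP (hom G T)) => [->//|hG].
have := H T hG; rewrite Rmult_1_l => h.
have hF := P T hG.
have := ln_le_inv (INRpos hG) (INRpos hF) h.
by move/INR_le/leP.
Qed.

Lemma nz x : 0 < x -> x <> 0.
Proof. by move=> h; apply: Rgt_not_eq. Qed.

Lemma ln_expn (x k : nat) : (0 < x)%N -> ln (INR (x ^ k)%N) = INR k * ln (INR x).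
Proof. by move=> hx; rewrite INR_expn ln_pow //; apply: INRpos. Qed.

Lemma part_d F G m n (hm : (0 < m)%N) (hn : (0 < n)%N) : arrow F G ->
  HDE (copies hm F) (copies hn G) = INR m / INR n * HDE F G.
Proof.
move=> aFG; have P := Pc_arrow aFG.
have a0 := INRpos hm; have b0 := INRpos hn.
have gpos : forall T, (0 < hom (copies hn G) T)%N -> (0 < hom G T)%N.
  by move=> T; rewrite hom_copies expn_gt0 => /orP [//|/eqP en]; rewrite en in hn.
have P' : Pc (copies hm F) (copies hn G).
  move=> T /gpos /P hF; by rewrite hom_copies expn_gt0 hF.
have [s1 s2] := HDE_spec P; have M0 := HDE_ge0 P.
apply: HDE_is => //.
  move=> T /gpos hG; have hF := P T hG.
  rewrite !hom_copies !ln_expn //.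
  have := s1 T hG; set X := ln (INR (hom G T)); set Y := ln (INR (hom F T)); set M := HDE F G => h.
  replace (INR m / INR n * M * (INR n * X)) with (INR m * (M * X)) by (field; exact: nz).
  by apply: Rmult_le_compat_l => //; lra.
move=> c hc.
have : c * INR n / INR m <= HDE F G.
  apply: s2 => T hG; have hF := P T hG.
  have hG' : (0 < hom (copies hn G) T)%N by rewrite hom_copies expn_gt0 hG.
  have := hc T hG'; rewrite !hom_copies !ln_expn //.
  set X := ln (INR (hom G T)); set Y := ln (INR (hom F T)) => h.
  apply (Rmult_le_reg_l (INR m)) => //.
  by replace (INR m * (c * INR n / INR m * X)) with (c * (INR n * X)) by (field; exact: nz).
set M := HDE F G => h.
apply (Rmult_le_reg_l (INR n / INR m)).
  by apply: Rdiv_lt_0_compat.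
replace (INR n / INR m * (INR m / INR n * M)) with M by (field; split; exact: nz).
by replace (INR n / INR m * c) with (c * INR n / INR m) by (field; exact: nz).
Qed.

Lemma part_e F G :
  (exists f : gV F -> gV G, is_hom f /\ forall v : gV G, exists a, f a = v) ->
  succeq F G.
Proof.
move=> [f [hf fs]]; have aFG : arrow F G by apply/hom_gt0P; exists f.
split=> //; apply: (proj2 (HDE_spec (Pc_arrow aFG))) => T hG.
rewrite Rmult_1_l; apply: ln_le_mono; first exact: INRpos.
exact: le_INR' (hom_surj_le T hf fs).
Qed.

Lemma part_f F G : arrow F G ->
  (0 < HDE F G <->
   forall v : gV G, exists f : gV F -> gV G, is_hom f /\ exists a, f a = v).
Proof.
move=> aFG; have P := Pc_arrow aFG; have [s1 s2] := HDE_spec P.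
split=> [pos|cov]; last first.
  have g0 := INRpos (gV_nonempty G).
  apply: Rlt_le_trans (s2 (/ INR #|gV G|) _); first exact: Rinv_0_lt_compat.
  move=> T hG; have hF := P T hG.
  have := ln_le_mono (INRpos hG) (le_INR' (hom_cover_le T cov)).
  rewrite ln_expn //; set X := ln _; set Y := ln _ => h.
  apply (Rmult_le_reg_l (INR #|gV G|)) => //.
  by replace (INR #|gV G| * (/ INR #|gV G| * X)) with X by (field; exact: nz).
apply: NNPP => ncov.
have [v hv] := not_all_ex_not _ _ ncov.
have Hv : forall f : gV F -> gV G, is_hom f -> forall a, f a <> v.
  by move=> f hf a e; apply: hv; exists f; split => //; exists a.
set M := HDE F G in pos s1 s2.
have h0 := aFG; rewrite /arrow in h0.
have [N hN] := INR_unbounded (exp (ln (INR (hom F G)) / M)).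
have Npos : (0 < N)%N.
  rewrite lt0n; apply/eqP => e; rewrite e /= in hN; have := exp_pos (ln (INR (hom F G)) / M); lra.
set T := Blow v N.
have hGT : (N <= hom G T)%N by apply: blow_hom_ge.
have hG : (0 < hom G T)%N by apply: leq_trans hGT.
have hFT : (hom F T <= hom F G)%N by apply: blow_hom_le.
have hF := P T hG.
have l1 := ln_le_mono (INRpos hF) (le_INR' hFT).
have l2 := ln_le_mono (INRpos Npos) (le_INR' hGT).
have l3 : ln (INR (hom F G)) / M < ln (INR N).
  by rewrite -{1}(ln_exp (ln (INR (hom F G)) / M)); apply: ln_increasing => //; apply: exp_pos.
have := s1 T hG.
have : M * (ln (INR (hom F G)) / M) < M * ln (INR (hom G T)).
  by apply: Rmult_lt_compat_l => //; lra.
replace (M * (ln (INR (hom F G)) / M)) with (ln (INR (hom F G))) by (field; exact: nz).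
lra.
Qed.

Local Close Scope R_scope.
Theorem lemma2p2 :
  (forall F G : graph, arrow F G ->
     forall T : graph, Rle (hpow (hom G T) (HDE F G)) (INR (hom F T)))
  /\ (forall F : graph, succeq F F)
  /\ (forall F G H : graph, succeq F G -> succeq G H -> succeq F H)
  /\ (forall F G : graph, succeq F G -> succeq G F -> iso F G)
  /\ (forall F G H : graph, arrow F G -> arrow G H ->
        Rle (Rmult (HDE F G) (HDE G H)) (HDE F H))
  /\ (forall (F G : graph) (m n : nat) (hm : 0 < m) (hn : 0 < n), arrow F G ->
        HDE (copies hm F) (copies hn G) = Rmult (Rdiv (INR m) (INR n)) (HDE F G))
  /\ (forall F G : graph,
        (exists f : gV F -> gV G, is_hom f /\ forall v : gV G, exists a, f a = v) ->
        succeq F G)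
  /\ (forall F G : graph, arrow F G ->
        (Rlt R0 (HDE F G) <->
         forall v : gV G, exists f : gV F -> gV G, is_hom f /\ exists a, f a = v)).
Proof.
split.
  move=> F G aFG T; have P := Pc_arrow aFG.
  exact: (proj2 (set_char _ P) (proj1 (HDE_spec P))).
split.
  move=> F; apply: part_e; exists id; split; first by apply/is_homP.
  by move=> v; exists v.
split.
  move=> F G H [a1 h1] [a2 h2]; have a3 := arrow_trans a1 a2; split => //.
  apply: Rle_trans (part_c a1 a2).
  have := Rmult_le_compat _ _ _ _ Rle_0_1 Rle_0_1 h1 h2; rewrite Rmult_1_l; exact.
split.
  move=> F G [a1 h1] [a2 h2]; apply: lovasz => T.
  have P1 := Pc_arrow a1; have P2 := Pc_arrow a2.
  have H1 : Hs F G 1 by apply: Hs_mono (proj1 (HDE_spec P1)) h1.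
  have H2 : Hs G F 1 by apply: Hs_mono (proj1 (HDE_spec P2)) h2.
  by apply/eqP; rewrite eqn_leq (one_le P1 H1) (one_le P2 H2).
split; first exact: part_c.
split; first by move=> F G m n hm hn; apply: part_d.
split; first exact: part_e.
exact: part_f.
Qed.
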